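(* Let $m=2^{e_1}p_2^{e_2}\cdots p_r^{e_r}$ with $e_1\ge0$, $p_j$ distinct odd primes and $e_j\ge1$, and let $m_0$ be the squarefree part of $m/2^{e_1}$. Then for every real $s>1/2$, $\mathbb E(\mathbb X_s(m))=h_m(s)$. Furthermore, \[\mathbb E(\mathbb X_\infty(m))=\frac{(-1)^{\omega(m_0)}}{m_0}\prod_{2\le j\le r,\ e_j\text{ even}}\Bigl(1-\frac2{p_j}\Bigr)\frac{a(m)}4.\]
   Context: $\omega(m_0)$ is the number of prime factors of $m_0$; $a(m)=4$ if $m$ is odd and $a(m)=2(-1)^{e_1}$ otherwise. For real $s>1/2$, $(\mathbb X_s(p))_p$ are independent random variables indexed by primes with, for odd $p$, $\mathbb P(\mathbb X_s(p)=1)=a_p(s):=\frac{p-3}{2p}+\frac{2}{p(p^s+1)}$, $\mathbb P(\mathbb X_s(p)=-1)=b_p(s):=\frac{p-1}{2p}$, $\mathbb P(\mathbb X_s(p)=0)=c_p(s):=1-a_p(s)-b_p(s)=1-\frac1p\bigl(p-2+\frac2{p^s+1}\bigr)$; and $\mathbb P(\mathbb X_s(2)=1)=\frac1{8^s+2^s+2}$, $\mathbb P(\mathbb X_s(2)=-1)=\frac12\frac{8^s-4^s+2}{8^s+2^s+2}$, $\mathbb P(\mathbb X_s(2)=0)=\frac{2^{s-1}(4^s+2^s+2)}{8^s+2^s+2}$. $(\mathbb X_\infty(p))_p$ are independent with, for odd $p$, $\mathbb P(\mathbb X_\infty(p)=1)=\frac{p-3}{2p}$, $\mathbb P(\mathbb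 X_\infty(p)=-1)=\frac{p-1}{2p}$, $\mathbb P(\mathbb X_\infty(p)=0)=\frac2p$, and $\mathbb P(\mathbb X_\infty(2)=1)=0$, $\mathbb P(\mathbb X_\infty(2)=\pm\text{}-1)=\mathbb P(\mathbb X_\infty(2)=0)=\frac12$ (i.e. $\mathbb P(\mathbb X_\infty(2)=-1)=\frac12$). Both families are extended totally multiplicatively: value $1$ at $n=1$ and $\prod_{p^e\|n}(\cdot)(p)^e$. Finally \[h_m(s)=\frac{(-1)^{\omega(m_0)}}{m_0}\,\frac{\prod_{2\le j\le r,\ e_j\text{ even}}\bigl(1-\frac2{p_j}\bigr)\bigl(1+\frac{2(p_j-1)}{(p_j-2)(p_j^s-1)}\bigr)}{\prod_{p\mid m}\bigl(1+\frac2{p^s-1}\bigr)}\,\tilde\kappa(m,s),\] where $\tilde\kappa(m,s)=1$ if $m$ is odd and $\tilde\kappa(m,s)=\frac{(-1)^{e_1}}2\frac{8^s+4^s}{8^s+2^s+2}\bigl(1+\frac{2(1+(-1)^{e_1})}{4^s(2^s-1)}\bigr)$ if $m$ is even. *)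

(* Defs.v *)
From HB Require Import structures.
From mathcomp Require Import all_boot all_order all_algebra.
From mathcomp Require Import all_classical all_reals all_analysis.
Set Implicit Arguments. Unset Strict Implicit. Unset Printing Implicit Defensive.
Import Order.TTheory GRing.Theory Num.Theory.
Local Open Scope ring_scope.

Section Defs.
Variable R : realType.

(* The three possible values -1, 0, 1 of X(p), indexed by 'I_3. *)
Definition val3 (v : 'I_3) : R :=
  if val v == 0%N then -1 else if val v == 1%N then 0 else 1.

(* A "law" gives, for each prime p, the distribution P(X(p) = val3 v). *)
Definition law := nat -> 'I_3 -> R.

Definition Xs_law (s : R) : law := fun p v =>
  let P := p%:R : R in
  if p == 2%N then
    let d := 8 `^ s + 2 `^ s + 2 in
    if val v == 0%N then (8 `^ s - 4 `^ s + 2) / (2 * d)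
    else if val v == 1%N then 2 `^ (s - 1) * (4 `^ s + 2 `^ s + 2) / d
    else 1 / d
  else
    let a := (P - 3) / (2 * P) + 2 / (P * (P `^ s + 1)) in
    let b := (P - 1) / (2 * P) in
    if val v == 0%N then b
    else if val v == 1%N then 1 - a - b
    else a.

Definition Xinf_law : law := fun p v =>
  let P := p%:R : R in
  if p == 2%N then
    if val v == 2%N then 0 else 1 / 2
  else
    if val v == 0%N then (P - 1) / (2 * P)
    else if val v == 1%N then 2 / P
    else (P - 3) / (2 * P).

(* Expectation of X(m) = prod_{p^e || m} X(p)^e for a family (X(p))_p of
   independent random variables with laws L p: the joint law of the
   finitely many X(p), p | m, is the product distribution, and we integrate
   X(m) against it (sum over all value assignments x of the primes of m). *)
Definition expect_mult (L : law) (m : nat) : R :=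
  let ps := primes m in
  \sum_(x : {ffun 'I_(size ps) -> 'I_3})
     (\prod_(i < size ps) L (nth 0%N ps i) (x i)) *
     (\prod_(i < size ps) val3 (x i) ^+ logn (nth 0%N ps i) m).

Definition e1 (m : nat) : nat := logn 2 m.

Definition odd_primes_oddexp (m : nat) : seq nat :=
  [seq p <- primes m | odd p && odd (logn p m)].
Definition odd_primes_evenexp (m : nat) : seq nat :=
  [seq p <- primes m | odd p && ~~ odd (logn p m)].

(* m0 = squarefree part of m / 2^e1, and omega(m0). *)
Definition m0 (m : nat) : nat := \prod_(p <- odd_primes_oddexp m) p.
Definition omega_m0 (m : nat) : nat := size (odd_primes_oddexp m).

Definition a_fun (m : nat) : R :=
  if odd m then 4 else 2 * (-1) ^+ e1 m.

Definition kappa (m : nat) (s : R) : R :=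
  if odd m then 1
  else (-1) ^+ e1 m / 2 * ((8 `^ s + 4 `^ s) / (8 `^ s + 2 `^ s + 2)) *
       (1 + 2 * (1 + (-1) ^+ e1 m) / (4 `^ s * (2 `^ s - 1))).

Definition h_fun (m : nat) (s : R) : R :=
  (-1) ^+ omega_m0 m / (m0 m)%:R *
  ((\prod_(p <- odd_primes_evenexp m)
      ((1 - 2 / p%:R) *
       (1 + 2 * (p%:R - 1) / ((p%:R - 2) * (p%:R `^ s - 1))))) /
   (\prod_(p <- primes m) (1 + 2 / (p%:R `^ s - 1)))) *
  kappa m s.

End Defs.

(* Main.v *)
Require Import Defs.
From HB Require Import structures.
From mathcomp Require Import all_boot all_order all_algebra.
From mathcomp Require Import all_classical all_reals all_analysis.
From mathcomp Require Import ring lra.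
Import Order.TTheory GRing.Theory Num.Theory.
Local Open Scope ring_scope.

Lemma expect_multE (R : realType) (L : law R) m :
  expect_mult L m = \prod_(p <- primes m) \sum_(v : 'I_3) L p v * val3 R v ^+ logn p m.
Proof.
rewrite /expect_mult [RHS](big_nth 0%N) big_mkord bigA_distr_bigA /=.
by apply: eq_bigr => x _; rewrite -big_split.
Qed.



Lemma sign_prod (R : realType) (s : seq nat) :
  (-1) ^+ size s / (\prod_(p <- s) p)%:R = \prod_(p <- s) (-1 / p%:R : R).
Proof.
elim: s => [|p s IH]. by rewrite !big_nil expr0 divr1.
rewrite !big_cons /= exprS natrM invfM -IH; ring.
Qed.

Lemma two_part (R : realType) (F : nat -> R) m : (0 < m)%N ->
  (if odd m then 1 else F (logn 2 m)) =
  \prod_(p <- primes m) (if p == 2%N then F (logn p m) else 1).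
Proof.
move=> m0.
case: ifP => om.
  rewrite big_seq big1 // => p; rewrite mem_primes => /and3P [_ _ pd].
  case: eqP => // p2; move: pd; rewrite p2 dvdn2 om //.
have h2 : (2 \in primes m)%N by rewrite mem_primes m0 dvdn2 om.
rewrite (bigD1_seq 2%N h2 (primes_uniq m)) /= big1 ?mulr1 // => p /negPf -> //.
Qed.

Definition Kf (R : realType) (s : R) (e : nat) : R :=
  (-1) ^+ e / 2 * ((8 `^ s + 4 `^ s) / (8 `^ s + 2 `^ s + 2)) *
       (1 + 2 * (1 + (-1) ^+ e) / (4 `^ s * (2 `^ s - 1))).

Arguments Kf {R}.
Lemma pow_gt1 (R : realType) (x s : R) : 1 < x -> 0 < s -> 1 < x `^ s.
Proof.
move=> x1 s0.
have : 1 <= x `^ s by rewrite -(powRr0 x) ler_powR // ltW.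
rewrite le_eqVlt => /orP [|//].
rewrite eq_sym powR_eq1 => /orP [/eqP x1'|/orP [x0|/eqP s0']].
- by move: x1; rewrite x1' ltxx.
- by move: x0; rewrite ltNge ltW // (lt_trans ltr01).
- by move: s0; rewrite s0' ltxx.
Qed.

Lemma term2 (R : realType) (s : R) e : 0 < s -> (0 < e)%N ->
  \sum_(v : 'I_3) Xs_law s 2 v * val3 R v ^+ e =
  Kf s e / (1 + 2 / (2%:R `^ s - 1)).
Proof.
move=> s0 e0.
rewrite !big_ord_recr big_ord0 /= add0r /val3 /Xs_law /= expr1n mulr1.
rewrite expr0n eqn0Ngt e0 /= mulr0 addr0.
have t1 : 1 < 2 `^ s :> R by apply: pow_gt1 => //; lra.
have h8 : 8 `^ s = (2 `^ s) ^+ 3 :> R.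
  have -> : (8 : R) = 2 * (2 * 2) by lra.
  by rewrite !powRM // ?mulr_ge0 //; ring.
have h4 : 4 `^ s = (2 `^ s) ^+ 2 :> R.
  have -> : (4 : R) = 2 * 2 by lra.
  by rewrite !powRM //; ring.
rewrite /Kf h8 h4.
set t := 2 `^ s.
have tg : 1 < t by [].
have d0 : t ^+ 3 + t + 2 != 0 by rewrite lt0r_neq0 //; nra.
have d1 : t - 1 != 0 by rewrite subr_eq0 gt_eqF.
have d2 : t + 1 != 0 by rewrite lt0r_neq0 //; lra.
have d3 : t != 0 by rewrite gt_eqF //; lra.
rewrite -signr_odd; case: (odd e) => /=; rewrite ?expr1 ?expr0.
  by field; repeat (apply/andP; split); apply: lt0r_neq0; nra.
by field; repeat (apply/andP; split); apply: lt0r_neq0; nra.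
Qed.

Lemma termodd (R : realType) (s : R) p e : 0 < s -> prime p -> p != 2%N -> (0 < e)%N ->
  \sum_(v : 'I_3) Xs_law s p v * val3 R v ^+ e =
  (if odd e then -1 / p%:R else 1) *
  ((if ~~ odd e then (1 - 2 / p%:R) *
       (1 + 2 * (p%:R - 1) / ((p%:R - 2) * (p%:R `^ s - 1))) else 1) /
   (1 + 2 / (p%:R `^ s - 1))).
Proof.
move=> s0 pp p2 e0.
have p3 : (2 < p)%N by rewrite odd_prime_gt2 //; case: (even_prime pp) => // /eqP; rewrite (negPf p2).
rewrite !big_ord_recr big_ord0 /= add0r /val3 /Xs_law /= (negPf p2) /= expr1n mulr1.
rewrite expr0n eqn0Ngt e0 /= mulr0 addr0.
have P3 : 3 <= p%:R :> R by rewrite (ler_nat R 3 p).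
have t1 : 1 < p%:R `^ s :> R by apply: pow_gt1 => //; lra.
set t := p%:R `^ s. set P := p%:R : R.
have tg : 1 < t by [].
rewrite -signr_odd; case: (odd e) => /=; rewrite ?expr1 ?expr0.
  by field; repeat (apply/andP; split); apply: lt0r_neq0; nra.
by field; repeat (apply/andP; split); apply: lt0r_neq0; nra.
Qed.

Lemma terminf2 (R : realType) e : (0 < e)%N ->
  \sum_(v : 'I_3) Xinf_law R 2 v * val3 R v ^+ e = (-1) ^+ e / 2.
Proof.
move=> e0.
rewrite !big_ord_recr big_ord0 /= add0r /val3 /Xinf_law /= expr1n mulr1.
rewrite expr0n eqn0Ngt e0 /= mulr0 addr0.
by rewrite addr0 mul1r mulrC.
Qed.

Lemma terminfodd (R : realType) p e : prime p -> p != 2%N -> (0 < e)%N ->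
  \sum_(v : 'I_3) Xinf_law R p v * val3 R v ^+ e =
  (if odd e then -1 / p%:R else 1) * (if ~~ odd e then 1 - 2 / p%:R else 1).
Proof.
move=> pp p2 e0.
have p3 : (2 < p)%N by rewrite odd_prime_gt2 //; case: (even_prime pp) => // /eqP; rewrite (negPf p2).
rewrite !big_ord_recr big_ord0 /= add0r /val3 /Xinf_law /= (negPf p2) /= expr1n mulr1.
rewrite expr0n eqn0Ngt e0 /= mulr0 addr0.
have P3 : 3 <= p%:R :> R by rewrite (ler_nat R 3 p).
set P := p%:R : R.
rewrite -signr_odd; case: (odd e) => /=; rewrite ?expr1 ?expr0.
  by field; repeat (apply/andP; split); apply: lt0r_neq0; nra.
by field; repeat (apply/andP; split); apply: lt0r_neq0; nra.
Qed.

Theorem lemma16 (R : realType) (m : nat) : (0 < m)%N ->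
  (forall s : R, 1 / 2 < s -> expect_mult (Xs_law s) m = h_fun m s) /\
  expect_mult (@Xinf_law R) m =
    (-1) ^+ omega_m0 m / (m0 m)%:R *
    (\prod_(p <- odd_primes_evenexp m) (1 - 2 / (p%:R : R))) *
    (a_fun R m / 4).
Proof.
move=> m_gt0; split.
  move=> s s12; have s0 : 0 < s by lra.
  rewrite expect_multE /h_fun /omega_m0 /m0 sign_prod.
  have -> : kappa m s = if odd m then 1 else Kf s (logn 2 m) by [].
  rewrite two_part // /odd_primes_oddexp /odd_primes_evenexp !big_filter !(big_mkcond (fun p => odd p && _)).
  rewrite -prodfV -!big_split /=.
  apply: eq_big_seq => p; rewrite mem_primes => /and3P [pp _ pd].
  have e0 : (0 < logn p m)%N by rewrite logn_gt0 mem_primes pp m_gt0.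
  case: (eqVneq p 2%N) e0 => [->|p2] e0.
    by rewrite term2 //= mul1r div1r mulrC.
  have op : odd p by case: (even_prime pp) => // p2'; move: p2; rewrite p2' eqxx.
  by rewrite termodd // op ?(negPf p2) /= mulr1.
rewrite expect_multE /omega_m0 /m0 sign_prod.
have -> : a_fun R m / 4 = if odd m then 1 else (-1) ^+ (logn 2 m) / 2.
  by rewrite /a_fun /e1; case: ifP => _; field.
rewrite (@two_part R (fun e => (-1) ^+ e / 2 : R)) // /odd_primes_oddexp /odd_primes_evenexp !big_filter !(big_mkcond (fun p => odd p && _)).
rewrite -!big_split /=.
apply: eq_big_seq => p; rewrite mem_primes => /and3P [pp _ pd].
have e0 : (0 < logn p m)%N by rewrite logn_gt0 mem_primes pp m_gt0.
case: (eqVneq p 2%N) e0 => [->|p2] e0.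
  by rewrite terminf2 //= !mul1r.
have op : odd p by case: (even_prime pp) => // p2'; move: p2; rewrite p2' eqxx.
by rewrite terminfodd // op ?(negPf p2) /= ?mulr1.
Qed.
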